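(* Let $(X,d)$ be a metric space with $|X|\ge 2$, $a\in X$, and let $\tilde x$ be a sequence of points of $X$ that is $d$-statistically convergent to $a$. Then for every infinite subsequence $\tilde x'$ of $\tilde x$ with $\limsup_{n\to\infty}\frac{|K_{\tilde x'}(n)|}{n}=0$ there exist a sequence $\tilde y$ of points of $X$ and a subsequence $\tilde y'$ of $\tilde y$ such that: (i) $\tilde y$ and $\tilde x$ are statistically equivalent and $K_{\tilde x'}=K_{\tilde y'}$; (ii) $\tilde y$ is $d$-statistically convergent to $a$; (iii) $\tilde y'$ is not $d$-statistically convergent.
   Context: For a subsequence $\tilde z'=(z_{n(k)})$ of a sequence $(z_n)$ (with $(n(k))$ strictly increasing), $K_{\tilde z'}=\{n(k):k\in\mathbb N\}$ and $K_{\tilde z'}(n)=\{m\in K_{\tilde z'}:m\le n\}$. A sequence $(z_k)$ is $d$-statistically convergent to $a$ if for every $\epsilon>0$, $\lim_{n\to\infty}\frac1n|\{k\le n: d(z_k,a)\ge\epsilon\}|=0$, and $d$-statistically convergent if this holds for some $a\in X$; subsequences are regarded as sequences indexed by $k$. A set $M\subseteq\mathbb N$ is statistical dense if $\lim_{n\to\infty}|\{m\in M:m\le n\}|/n=1$; sequences $(x_n),(y_n)$ are statistically equivalent if $x_n=y_n$ for all $n$ in some statistical dense $M$. *)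

(* Defs.v *)
From HB Require Import structures.
From mathcomp Require Import all_boot all_order all_algebra.
From mathcomp Require Import all_classical all_reals all_analysis.
Set Implicit Arguments. Unset Strict Implicit. Unset Printing Implicit Defensive.
Import Order.TTheory GRing.Theory Num.Theory.
Import numFieldNormedType.Exports.
Local Open Scope ring_scope.
Local Open Scope classical_set_scope.

(* Convention: sequences are indexed by nat starting at 0; "k <= n" in the
   paper (1-based) becomes "k < n" here (0-based): the first n terms. *)

Definition is_metric (R : realType) (X : Type) (d : X -> X -> R) : Prop :=
  [/\ forall x y, 0 <= d x y,
      forall x y, d x y = 0 <-> x = y,
      forall x y, d x y = d y x &
      forall x y z, d x z <= d x y + d y z].

Definition count_upto (M : set nat) (n : nat) : nat :=
  count (fun m => `[< M m >]) (iota 0 n).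

Definition dens_ratio (R : realType) (M : set nat) : R^nat :=
  fun n => (count_upto M n)%:R / n%:R.

Definition dstat_conv_to (R : realType) (X : Type) (d : X -> X -> R)
    (z : nat -> X) (a : X) : Prop :=
  forall eps : R, 0 < eps ->
    dens_ratio R [set k | eps <= d (z k) a] @ \oo --> (0 : R).

Definition dstat_convergent (R : realType) (X : Type) (d : X -> X -> R)
    (z : nat -> X) : Prop :=
  exists a : X, dstat_conv_to d z a.

Definition stat_dense (R : realType) (M : set nat) : Prop :=
  dens_ratio R M @ \oo --> (1 : R).

Definition stat_equiv (R : realType) (X : Type) (x y : nat -> X) : Prop :=
  exists M : set nat, stat_dense R M /\ (forall n, M n -> x n = y n).

(* a subsequence is given by a strictly increasing index map phi;
   the subsequence of z is z \o phi and K = range phi *)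
Definition strict_incr (phi : nat -> nat) : Prop :=
  forall i j, (i < j)%N -> (phi i < phi j)%N.

(* Main.v *)
Require Import Defs.
From HB Require Import structures.
From mathcomp Require Import all_boot all_order all_algebra.
From mathcomp Require Import all_classical all_reals all_analysis.
From mathcomp Require Import ring lra zify.
From Stdlib Require Import Lia.
Import Order.TTheory GRing.Theory Num.Theory.
Import numFieldNormedType.Exports.
Local Open Scope ring_scope.
Local Open Scope classical_set_scope.

Section Aux.
Variable R : realType.

Lemma count_upto_le (M : set nat) n : (count_upto M n <= n)%N.
Proof. by rewrite /count_upto -{2}(size_iota 0 n) count_size. Qed.

Lemma dens_ge0 (M : set nat) n : 0 <= dens_ratio R M n.
Proof. by rewrite /dens_ratio divr_ge0. Qed.

Lemma dens_le1 (M : set nat) n : dens_ratio R M n <= 1.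
Proof.
rewrite /dens_ratio; case: n => [|n]; first by rewrite invr0 mulr0.
rewrite ler_pdivrMr ?ltr0n // mul1r ler_nat; exact: count_upto_le.
Qed.

Lemma count_upto_sub (M N : set nat) n : M `<=` N ->
  (count_upto M n <= count_upto N n)%N.
Proof.
move=> MN; apply: sub_count => k /asboolP Mk; apply/asboolP; exact: MN.
Qed.

Lemma dens_sub (M N : set nat) n : M `<=` N ->
  dens_ratio R M n <= dens_ratio R N n.
Proof.
move=> MN; rewrite /dens_ratio ler_wpM2r ?invr_ge0 // ler_nat.
exact: count_upto_sub.
Qed.

Lemma count_upto_U (M N : set nat) n :
  (count_upto (M `|` N) n <= count_upto M n + count_upto N n)%N.
Proof.
rewrite /count_upto -count_predUI.
apply: leq_trans (leq_addr _ _); apply: sub_count => k /asboolP [Mk|Nk];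
 apply/orP; [left|right]; exact/asboolP.
Qed.

Lemma dens_U (M N : set nat) n :
  dens_ratio R (M `|` N) n <= dens_ratio R M n + dens_ratio R N n.
Proof.
rewrite /dens_ratio -mulrDl -natrD ler_wpM2r ?invr_ge0 // ler_nat.
exact: count_upto_U.
Qed.

Lemma count_upto_C (M : set nat) n :
  (count_upto (~` M) n + count_upto M n)%N = n.
Proof.
rewrite /count_upto addnC -{3}(size_iota 0 n) -(count_predC (fun m => `[< M m >])).
congr (_ + _)%N; apply: eq_count => k /=.
by apply/asboolP/negP => [nM /asboolP|H Mk]; [|apply: H; apply/asboolP].
Qed.

Lemma dens_C (M : set nat) n : (0 < n)%N ->
  dens_ratio R (~` M) n = 1 - dens_ratio R M n.
Proof.
move=> n0; rewrite /dens_ratio.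
have hn : n%:R != 0 :> R by rewrite pnatr_eq0 -lt0n.
rewrite -[X in X - _](divff hn) -mulrBl; congr (_ * _).
by rewrite -{2}(count_upto_C M n) natrD addrK.
Qed.

Lemma limsup0_cvg (u : R^nat) : (forall n, 0 <= u n <= 1) ->
  limn_sup u = 0 -> u @ \oo --> (0:R).
Proof.
move=> hu hs.
have ub : has_ubound (range u) by exists 1 => _ [n _ <-]; case/andP: (hu n).
have lb : has_lbound (range u) by exists 0 => _ [n _ <-]; case/andP: (hu n).
have cs := cvg_sups_inf ub lb.
have : inf (range (sups u)) = 0.
  by rewrite -hs /limn_sup; apply/esym/cvg_lim.
move=> e; rewrite e in cs.
apply: (squeeze_cvgr _ (cvg_cst 0) cs).
apply: nearW => n; case/andP: (hu n) => -> _ /=.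
apply: ub_le_sup; last by exists n => /=.
by case: ub => M HM; exists M => _ [k _ <-]; apply: HM; exists k.
Qed.

Lemma count_odd n : (2 * count odd (iota 0 n) + odd n)%N = n.
Proof.
elim: n => // n IH.
have -> : iota 0 n.+1 = iota 0 n ++ [:: n] by rewrite -addn1 iotaD.
rewrite count_cat /= addn0.
move: IH; case: (odd n) => /=; lia.
Qed.

Lemma count_even n : (n <= 2 * count (predC odd) (iota 0 n))%N.
Proof.
have h1 := count_odd n; have h2 := count_predC odd (iota 0 n).
rewrite size_iota in h2; case: (odd n) h1 => /=; lia.
Qed.

Lemma not_cvg0 (M : set nat) (P : pred nat) :
  (forall n, (2 * count P (iota 0 n) + 1 >= n)%N) ->
  (forall k, P k -> M k) -> ~ (dens_ratio R M @ \oo --> (0:R)).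
Proof.
move=> hP PM /cvgr_lt h; have := h (1/3) (ltac:(rewrite divr_gt0 // ltr0n)); case=> N _ HN.
have := HN (maxn N 3) (leq_maxl _ _); rewrite /= /dens_ratio.
set n := maxn N 3; have n3 : (3 <= n)%N by rewrite leq_maxr.
have c1 : (count P (iota 0 n) <= count_upto M n)%N.
  by apply: sub_count => k Pk; apply/asboolP; exact: PM.
have c2 := hP n.
have c3 : (n <= 3 * count_upto M n)%N by lia.
rewrite ltr_pdivrMr ?ltr0n; last by lia.
move: c3; rewrite -(ler_nat R) natrM => c3.
have : (3:R) <= n%:R by rewrite ler_nat.
move: c3; set c := (count_upto M n)%:R; set m := n%:R; move=> c3 m3. lra.
Qed.

End Aux.

Lemma strict_incr_inj (phi : nat -> nat) : strict_incr phi -> injective phi.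
Proof.
move=> hp i j e; case: (ltngtP i j) => // /hp; rewrite e ltnn //.
Qed.

Theorem theorem6 (R : realType) (X : Type) (d : X -> X -> R)
  (hd : is_metric d) (hX : exists u v : X, u <> v) (a : X) (x : nat -> X)
  (hx : dstat_conv_to d x a) :
  forall phi : nat -> nat, strict_incr phi ->
    limn_sup (dens_ratio R (range phi)) = 0 ->
    exists (y : nat -> X) (psi : nat -> nat),
      strict_incr psi /\
      (stat_equiv R y x /\ range phi = range psi) /\
      dstat_conv_to d y a /\
      ~ dstat_convergent d (y \o psi).
Proof.
move=> phi hphi hsup.
case: hX => u [v uv].
case: hd => d0 dE dC dT.
have hr : dens_ratio R (range phi) @ \oo --> (0:R).
  apply: limsup0_cvg => // n; by rewrite dens_ge0 dens_le1.
pose y n := if `[< exists k, phi k = n /\ odd k >] then u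
            else if `[< exists k, phi k = n >] then v else x n.
have yphi k : y (phi k) = if odd k then u else v.
  rewrite /y; case: (boolP (odd k)) => ok.
    by case: asboolP => // -[]; exists k.
  case: asboolP => [[j [/(@strict_incr_inj phi hphi) -> ]]|_]; first by rewrite (negbTE ok).
  by case: asboolP => // -[]; exists k.
have yout n : ~ range phi n -> y n = x n.
  move=> nr; rewrite /y.
  case: asboolP => [[k [e _]]|_]; first by case: nr; exists k.
  by case: asboolP => [[k e]|_]; first by case: nr; exists k.
exists y, phi; split => //; split; [split=> //|split].
- exists (~` range phi); split; last by move=> n /yout.
  rewrite /stat_dense.
  have H1 : (fun n => 1 - dens_ratio R (range phi) n) @ \oo --> (1:R).
    have := cvgB (cvg_cst (1:R)) hr; rewrite subr0 => H; apply: H.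
  apply: (squeeze_cvgr _ H1 H1).
  exists 1%N => //= n hn; by rewrite dens_C // lexx.
- move=> eps he.
  have H2 : (fun n => dens_ratio R [set k | eps <= d (x k) a] n +
                    dens_ratio R (range phi) n) @ \oo --> (0:R).
    have := cvgD (hx eps he) hr; rewrite addr0 => H; apply: H.
  apply: (squeeze_cvgr _ (cvg_cst 0) H2).
  + apply: nearW => n; rewrite dens_ge0 /=.
    apply: (le_trans _ (dens_U _ _ _ _)); apply: dens_sub => k /= hk.
    have [kr|kr] := pselect (range phi k); first by right.
    by left; rewrite -(yout _ kr).
- case=> z hz.
  have duv : 0 < d u v.
    by rewrite lt_neqAle d0 andbT eq_sym; apply/eqP => /dE.
  have := hz (d u v / 2) (ltac:(by rewrite divr_gt0)).
  have tri := dT u z v; rewrite (dC z v) in tri.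
  have [hu|hu] := lerP (d u v / 2) (d u z).
  + apply: (@not_cvg0 R _ odd).
      by move=> n; have := count_odd n; case: (odd n) => /=; lia.
    by move=> k ok /=; rewrite yphi ok.
  + apply: (@not_cvg0 R _ (predC odd)).
      by move=> n; have := count_even n; lia.
    move=> k /= ok; rewrite yphi (negbTE ok); lra.
Qed.
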